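(* For each $n$ let $\mathbf d=(d(1),\dots,d(n))$ be a sequence of non-negative integers with even sum, $M=\sum_i d(i)$, $\Delta=\max_i d(i)$, and suppose there exist sets $S\subseteq[n]$ and a function $\delta=\delta(n)\to0$ such that, with $\gamma=d(S)/M$, $\Delta^2(\gamma^{-1}\log M)^{12}\le\delta\, d(S)$. Then for all sufficiently large $n$, $\mathbf d$ is graphical, i.e. there exists a simple graph on vertex set $[n]$ in which vertex $i$ has degree $d(i)$ for all $i$.
   Context: $d(S)=\sum_{i\in S}d(i)$; $n\to\infty$ (with $M\to\infty$). *)

(* Defs.v *)
From HB Require Import structures.
From mathcomp Require Import all_boot all_order all_algebra.
From mathcomp Require Import all_classical all_reals all_analysis.
Set Implicit Arguments. Unset Strict Implicit. Unset Printing Implicit Defensive.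
Import Order.TTheory GRing.Theory Num.Theory.

Definition degsum (n : nat) (d : 'I_n -> nat) : nat := \sum_(i < n) d i.

Definition maxdeg (n : nat) (d : 'I_n -> nat) : nat := \max_(i < n) d i.

Definition degset (n : nat) (d : 'I_n -> nat) (S : {set 'I_n}) : nat :=
  \sum_(i in S) d i.

Definition graphical (n : nat) (d : 'I_n -> nat) : Prop :=
  exists e : rel 'I_n,
    [/\ symmetric e, irreflexive e &
        forall i : 'I_n, #|[set j | e i j]| = d i].

(* Main.v *)
Require Import Defs.
From HB Require Import structures.
From mathcomp Require Import all_boot all_order all_algebra.
From mathcomp Require Import all_classical all_reals all_analysis.
From mathcomp Require Import zify.
Import Order.TTheory GRing.Theory Num.Theory.

Set Implicit Arguments. Unset Strict Implicit. Unset Printing Implicit Defensive.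

Section Comb.
Variable T : finType.

Definition gdeg (e : rel T) (i : T) : nat := \sum_j (e i j : nat).

Lemma card_gdeg e i : #|[set j | e i j]| = gdeg e i.
Proof.
rewrite -sum1_card big_mkcond /gdeg; apply: eq_bigr => j _.
by rewrite inE; case: (e i j).
Qed.

Lemma sum_eqb (b : T) : \sum_j ((j == b) : nat) = 1.
Proof. by rewrite (bigD1 b) //= eqxx big1 // => j /negbTE ->. Qed.

Definition pe (a b : T) : rel T :=
  fun i j => ((i == a) && (j == b)) || ((i == b) && (j == a)).

Lemma pe_sym a b : symmetric (pe a b).
Proof. by move=> i j; rewrite /pe orbC; congr orb; rewrite andbC. Qed.

Lemma pe_irr a b : a != b -> irreflexive (pe a b).
Proof.
move=> ab i; apply/negP; rewrite /pe => /orP[] /andP[/eqP ia /eqP ib];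
by move: ab; rewrite -ia -ib eqxx.
Qed.

Lemma gdeg_pe a b i : a != b -> gdeg (pe a b) i = (i == a) + (i == b).
Proof.
move=> ab; rewrite /gdeg.
have -> : \sum_j (pe a b i j : nat) =
   \sum_j ((i == a) * (j == b) + (i == b) * (j == a)).
  apply: eq_bigr => j _; rewrite /pe.
  have [ia|ia] := eqVneq i a; have [ib|ib] := eqVneq i b;
    rewrite /= ?mul1n ?mul0n ?addn0 ?add0n ?orbF //.
  by move: ab; rewrite -ia -ib eqxx.
by rewrite big_split /= -!big_distrr /= !sum_eqb !muln1.
Qed.

Lemma pe_eq a b c d i j : pe a b i j -> pe c d i j ->
  ((a == c) && (b == d)) || ((a == d) && (b == c)).
Proof.
rewrite /pe => /orP[] /andP[/eqP<- /eqP<-] /orP[] /andP[/eqP-> /eqP->];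
by rewrite !eqxx ?orbT.
Qed.

Lemma pe_inv a b i j : pe a b i j -> ((i == a) && (j == b)) || ((i == b) && (j == a)).
Proof. by []. Qed.

Lemma finish (d : T -> nat) (e e' : rel T) (u v : T) m :
  (forall i, gdeg e i <= d i) -> \sum_i gdeg e i = m.*2 ->
  gdeg e u < d u -> gdeg e v < d v -> (u = v -> (gdeg e u).+2 <= d u) ->
  (forall i, gdeg e' i = gdeg e i + (i == u) + (i == v)) ->
  (forall i, gdeg e' i <= d i) /\ \sum_i gdeg e' i = m.+1.*2.
Proof.
move=> le sm hu hv huv h'; split.
  move=> i; rewrite h'.
  have [iu|iu] := eqVneq i u; have [iv|iv] := eqVneq i v; rewrite /=.
  - by subst; rewrite addn1 addn1; exact: huv.
  - by subst; rewrite addn0 addn1.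
  - by subst; rewrite addn0 addn1.
  - by rewrite !addn0; exact: le.
under eq_bigr => i _ do rewrite h'.
by rewrite !big_split /= !sum_eqb sm doubleS addn1 addn1.
Qed.


Lemma build (d : T -> nat) :
  ~~ odd (\sum_i d i) ->
  3 * (\max_i d i) ^ 2 + 2 * (\max_i d i) < \sum_i d i ->
  forall m, m.*2 <= \sum_i d i ->
  exists e : rel T, [/\ symmetric e, irreflexive e,
     forall i, gdeg e i <= d i & \sum_i gdeg e i = m.*2].
Proof.
set M := \sum_i d i; set D := \max_i d i => ev big.
have HD : forall i, d i <= D by move=> i; exact: (leq_bigmax (F := d) i).
elim=> [|m IH] hm.
  exists (fun _ _ => false); split => //.
    by move=> i; rewrite /gdeg big1.
  by rewrite big1 // => i _; rewrite /gdeg big1.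
have [e [se ie le sm]] : exists e : rel T, [/\ symmetric e, irreflexive e,
     forall i, gdeg e i <= d i & \sum_i gdeg e i = m.*2].
  by apply: IH; apply: leq_trans hm; rewrite leq_double.
set r := fun i => d i - gdeg e i.
have hM : M = m.*2 + \sum_i r i.
  rewrite -sm -big_split /M; apply: eq_bigr => i _; by rewrite /r /= subnKC.
have hr2 : 2 <= \sum_i r i.
  by move: hm; rewrite hM doubleS -addn2 leq_add2l.
suff [u [v [e' [[se' ie' de'] [hu hv huv]]]]] : exists u v (e' : rel T),
   [/\ symmetric e', irreflexive e' &
       forall i, gdeg e' i = gdeg e i + (i == u) + (i == v)] /\
   [/\ gdeg e u < d u, gdeg e v < d v & (u = v -> (gdeg e u).+2 <= d u)].
  have [h1 h2] := finish le sm hu hv huv de'.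
  by exists e'; split.
case: (boolP [exists u, exists v, [&& u != v, gdeg e u < d u,
                 gdeg e v < d v & ~~ e u v]]).
  case/existsP=> u /existsP[v /and4P[uv hu hv euv]].
  exists u, v, (fun i j => e i j || pe u v i j); split; last first.
    by split => // euv'; move: uv; rewrite euv' eqxx.
  split.
  - by move=> i j; rewrite /= se pe_sym.
  - by move=> i; rewrite /= ie (pe_irr uv).
  move=> i; rewrite -addnA -(gdeg_pe i uv) /gdeg -big_split /=.
  apply: eq_bigr => j _.
  have : pe u v i j -> ~~ e i j.
    by case/orP=> /andP[/eqP-> /eqP->] //; rewrite se.
  by case: (e i j); case: (pe u v i j) => //= /(_ isT).
move=> hn.
have [u hu] : exists u, gdeg e u < d u.
  case: (pickP (fun i => gdeg e i < d i)) => [u hu | none]; first by exists u.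
  move: hr2; rewrite big1 // => i _; apply/eqP; rewrite subn_eq0 leqNgt.
  by rewrite none.
have clique : forall w, gdeg e w < d w -> w != u -> e u w.
  move=> w hw wu; move/existsPn: hn => /(_ u) /existsPn /(_ w).
  by rewrite eq_sym wu hu hw /= negbK.
suff key : forall v, gdeg e v < d v -> (u = v -> (gdeg e u).+2 <= d u) ->
   exists e' : rel T,
   [/\ symmetric e', irreflexive e' &
       forall i, gdeg e' i = gdeg e i + (i == u) + (i == v)].
  case: (pickP (fun w => (w != u) && (gdeg e w < d w))) => [v /andP[vu hv]|nov].
    have [e' H] := key v hv (fun uv => ltac:(by move: vu; rewrite uv eqxx)).
    by exists u, v, e'; split => //; split => // uv; move: vu; rewrite uv eqxx.
  have hru : \sum_i r i = r u.
    rewrite (bigD1 u) //= big1 ?addn0 // => i iu; apply/eqP.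
    have := nov i; rewrite iu /= => /negbT; rewrite -leqNgt /r subn_eq0.
    by [].
  have hu2 : (gdeg e u).+2 <= d u.
    have : 2 <= r u by rewrite -hru.
    by rewrite /r leq_subRL ?addn2 // ltnW.
  have [e' H] := key u hu (fun _ => hu2).
  by exists u, u, e'; split => //; split.
move=> v hv huv.
set A := [set x | e u x || (x == u) || (x == v)].
set B := [set y | e v y || (y == u) || (y == v)].
have cardN : forall w, #|[set x | e w x || (x == u) || (x == v)]| <= (gdeg e w).+2.
  move=> w.
  have -> : [set x | e w x || (x == u) || (x == v)] = [set x | e w x] :|: [set u; v].
    by apply/setP => x; rewrite !inE orbA.
  rewrite cardsU -card_gdeg -addn2; apply: leq_trans (leq_subr _ _) _.
  by rewrite leq_add2l cards2; case: (u != v).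
have [x [y [exy xA yB]]] : exists x y, [/\ e x y, x \notin A & y \notin B].
  case: (pickP (fun p : T * T => [&& e p.1 p.2, p.1 \notin A & p.2 \notin B])).
    by move=> [x y] /and3P[? ? ?]; exists x, y.
  move=> none; exfalso.
  have bad : forall x y, (e x y : nat) <= (x \in A) * e x y + (y \in B) * e x y.
    move=> x y; have := none (x, y); rewrite /=.
    by case: (e x y); case: (x \in A); case: (y \in B).
  have h1 : m.*2 <= \sum_(x in A) gdeg e x + \sum_(y in B) gdeg e y.
    rewrite -sm /gdeg.
    apply: (@leq_trans (\sum_x \sum_y ((x \in A) * e x y + (y \in B) * e x y))).
      by apply: leq_sum => x _; apply: leq_sum => y _; exact: bad.
    rewrite [X in X <= _](_ : _ = \sum_x \sum_y ((x \in A) * e x y) + \sum_x \sum_y ((y \in B) * e x y)); last first.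
      by rewrite -big_split; apply: eq_bigr => x _; rewrite big_split.
    apply: eq_leq; congr (_ + _).
      rewrite [RHS]big_mkcond; apply: eq_bigr => x _ /=.
      by rewrite -big_distrr /=; case: (x \in A); rewrite ?mul1n ?mul0n.
    rewrite exchange_big [RHS]big_mkcond; apply: eq_bigr => y _ /=.
    rewrite -big_distrr /=; case: (y \in B); rewrite ?mul1n ?mul0n //.
    by apply: eq_bigr => x _; rewrite se.
  have hA : \sum_(x in A) gdeg e x <= #|A| * D.
    by rewrite -sum_nat_const; apply: leq_sum => x _; apply: leq_trans (le x) (HD x).
  have hB : \sum_(x in B) gdeg e x <= #|B| * D.
    by rewrite -sum_nat_const; apply: leq_sum => x _; apply: leq_trans (le x) (HD x).
  have cA : #|A| <= D.+1 by apply: leq_trans (cardN u) _; apply: leq_trans hu (HD u).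
  have cB : #|B| <= D.+1 by apply: leq_trans (cardN v) _; apply: leq_trans hv (HD v).
  set Ds := [set i | gdeg e i < d i].
  have hr : \sum_i r i <= #|Ds| * D.
    rewrite -sum_nat_const (bigID (fun i => i \in Ds)) /= [X in _ + X]big1 ?addn0.
      by apply: leq_sum => i _; rewrite /r; apply: leq_trans (leq_subr _ _) (HD i).
    move=> i; rewrite inE -leqNgt => hi; apply/eqP; by rewrite /r subn_eq0.
  have cD : #|Ds| <= D.
    have : Ds \subset u |: [set w | e u w].
      apply/fintype.subsetP => w; rewrite !inE => hw; have [->|wu] := eqVneq w u => //=.
      exact: clique.
    move/subset_leq_card; rewrite cardsU1 card_gdeg => h.
    apply: leq_trans h _; apply: leq_trans (HD u); apply: leq_trans hu.
    by case: (u \notin _).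
  have m1 : #|A| * D <= D.+1 * D by apply: leq_mul.
  have m2 : #|B| * D <= D.+1 * D by apply: leq_mul.
  have m3 : #|Ds| * D <= D * D by apply: leq_mul.
  move: big; rewrite hM expnS expn1 => big.
  have : M <= D.+1 * D + D.+1 * D + D * D.
    rewrite hM; apply: leq_add; last by apply: leq_trans hr m3.
    apply: leq_trans h1 _; apply: leq_add.
      exact: leq_trans hA m1.
    exact: leq_trans hB m2.
  lia.
move: xA yB; rewrite !inE !negb_or => /andP[/andP[eux xu] xv] /andP[/andP[evy yu] yv].
have xy : x != y by apply: contraTneq exy => ->; rewrite ie.
have ux : u != x by rewrite eq_sym.
have vy : v != y by rewrite eq_sym.
exists (fun i j => (e i j && ~~ pe x y i j) || pe u x i j || pe v y i j); split.
- by move=> i j; rewrite /= se (pe_sym x y) (pe_sym u x) (pe_sym v y).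
- by move=> i; rewrite /= ie (pe_irr ux) (pe_irr vy).
move=> i.
have key : forall j, ((e i j && ~~ pe x y i j) || pe u x i j || pe v y i j : nat)
     + pe x y i j = e i j + pe u x i j + pe v y i j.
  move=> j.
  have h1 : pe x y i j -> e i j.
    by case/orP=> /andP[/eqP-> /eqP->] //; rewrite se.
  have h2 : pe u x i j -> ~~ e i j.
    by case/orP=> /andP[/eqP-> /eqP->] //; rewrite se.
  have h3 : pe v y i j -> ~~ e i j.
    by case/orP=> /andP[/eqP-> /eqP->] //; rewrite se.
  have h4 : pe x y i j -> pe u x i j -> False.
    move=> p q; have := pe_eq p q.
    by rewrite (negbTE xu) (negbTE yu) !andbF.
  have h5 : pe x y i j -> pe v y i j -> False.
    move=> p q; have := pe_eq p q.
    by rewrite (negbTE xv) (negbTE xy) !andFb.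
  have h6 : pe u x i j -> pe v y i j -> False.
    move=> p q; have := pe_eq p q.
    by rewrite (negbTE xy) (negbTE xv) !andbF.
  move: h1 h2 h3 h4 h5 h6.
  case: (e i j); case: (pe x y i j); case: (pe u x i j); case: (pe v y i j) => //=;
  by move=> *; exfalso; auto.
have H : \sum_j (((e i j && ~~ pe x y i j) || pe u x i j || pe v y i j) : nat)
     + \sum_j (pe x y i j : nat) = \sum_j (e i j : nat) + \sum_j (pe u x i j : nat)
     + \sum_j (pe v y i j : nat).
  by rewrite -!big_split; apply: eq_bigr => j _; exact: key.
change (gdeg (fun i j => (e i j && ~~ pe x y i j) || pe u x i j || pe v y i j) i
   + gdeg (pe x y) i = gdeg e i + gdeg (pe u x) i + gdeg (pe v y) i) in H.
move: H; rewrite !gdeg_pe //.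
move: (gdeg _ i) (gdeg e i) (nat_of_bool (i == x)) (nat_of_bool (i == y))
  (nat_of_bool (i == u)) (nat_of_bool (i == v)) => a b c f g h.
lia.
Qed.

End Comb.

Lemma graphical_of_big n (d : 'I_n -> nat) :
  ~~ odd (\sum_i d i) ->
  3 * (\max_i d i) ^ 2 + 2 * (\max_i d i) < \sum_i d i ->
  exists e : rel 'I_n,
    [/\ symmetric e, irreflexive e &
        forall i : 'I_n, #|[set j | e i j]| = d i].
Proof.
move=> ev big.
have hm : ((\sum_i d i)./2).*2 <= \sum_i d i.
  by rewrite -{2}(odd_double_half (\sum_i d i)) (negbTE ev).
have [e [se ie le sm]] := build ev big hm.
exists e; split => // i.
rewrite card_gdeg.
have : \sum_i (d i - gdeg e i) == 0.
  have hh : ((\sum_i d i)./2).*2 = \sum_i d i.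
    by rewrite -{2}(odd_double_half (\sum_i d i)) (negbTE ev).
  by rewrite sumnB // sm hh subnn.
rewrite sum_nat_eq0 => /forallP /(_ i) /=; rewrite subn_eq0 => h.
by apply/eqP; rewrite eqn_leq le h.
Qed.

Unset Implicit Arguments.
Local Open Scope classical_set_scope.
Local Open Scope ring_scope.

Lemma pointwise (R : realType) (M dS Dl : nat) (dl : R) :
  (0 < dS)%N -> (dS <= M)%N -> expR (1 : R) <= M%:R -> (0 < M)%N -> dl <= 6^-1 ->
  (Dl%:R) ^+ 2 * (((dS%:R : R) / M%:R)^-1 * ln (M%:R : R)) ^+ 12 <= dl * dS%:R ->
  (3 * Dl ^ 2 + 2 * Dl < M)%N.
Proof.
move=> dS0 dSM eM M0 dl6 H.
have dSr : (0 : R) < dS%:R by rewrite ltr0n.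
have Mr : (0 : R) < M%:R by rewrite ltr0n.
have lnM : 1 <= ln (M%:R : R).
  rewrite -[X in X <= _](expRK 1) ler_ln //; rewrite ?posrE //.
have g1 : 1 <= ((dS%:R : R) / M%:R)^-1.
  by rewrite invf_div ler_pdivlMr // mul1r ler_nat.
have X1 : 1 <= (((dS%:R : R) / M%:R)^-1 * ln (M%:R : R)) ^+ 12.
  apply: exprn_ege1; have := ler_pM ler01 ler01 g1 lnM; by rewrite mulr1.
have h6 : ((6 * Dl ^ 2)%:R : R) <= M%:R.
  rewrite natrM natrX.
  have a1 : (Dl%:R : R) ^+ 2 <= Dl%:R ^+ 2 * (((dS%:R : R) / M%:R)^-1 * ln (M%:R : R)) ^+ 12.
    rewrite -{1}[(Dl%:R : R) ^+ 2]mulr1; apply: ler_wpM2l; last exact: X1.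
    by rewrite exprn_ge0 // ler0n.
  have a3 : dl * dS%:R <= 6^-1 * (dS%:R : R).
    by apply: ler_wpM2r; rewrite ?ler0n.
  have a4 : 6^-1 * (dS%:R : R) <= 6^-1 * M%:R.
    by apply: ler_wpM2l; rewrite ?invr_ge0 ?ler0n ?ler_nat.
  have : (Dl%:R : R) ^+ 2 <= 6^-1 * M%:R.
    exact: le_trans a1 (le_trans H (le_trans a3 a4)).
  move=> h; rewrite -ler_pdivlMl ?ltr0n //.
move: h6; rewrite ler_nat => h6.
have [->|Dpos] := posnP Dl; first by lia.
nia.
Qed.

Theorem proposition2p1 (R : realType)
  (d : forall n : nat, 'I_n -> nat)
  (S : forall n : nat, {set 'I_n})
  (delta : nat -> R)
  (Heven : forall n, ~~ odd (degsum (d n)))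
  (HMinf : forall B : nat, \forall n \near \oo, (B <= degsum (d n))%N)
  (Hdelta : delta @ \oo --> 0)
  (Hcond : \forall n \near \oo,
     (0 < degset (d n) (S n))%N /\
     let M : R := (degsum (d n))%:R in
     let dS : R := (degset (d n) (S n))%:R in
     let gamma : R := dS / M in
     ((maxdeg (d n))%:R) ^+ 2 * (gamma^-1 * ln M) ^+ 12 <= delta n * dS) :
  \forall n \near \oo, graphical (d n).
Proof.
have e0 : (0 : R) <= expR 1 by apply/ltW; exact: expR_gt0.
have [N0 hN0] : exists N0 : nat, expR (1 : R) <= N0%:R.
  by exists (Num.Def.archi_bound (expR (1 : R))); apply/ltW; exact: archi_boundP.
have Hd6 : \forall n \near \oo, delta n < 6^-1.
  by apply: (cvgr_lt 0) => //; rewrite invr_gt0.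
apply: filterS3 Hcond (HMinf N0.+1) Hd6 => n [dS0 Hn] hM d6.
apply: graphical_of_big; first exact: Heven.
apply: (@pointwise R _ (degset (d n) (S n)) _ (delta n)) => //.
- rewrite /degset /degsum [X in (_ <= X)%N](bigID (fun i => i \in S n)) /=.
  exact: leq_addr.
- apply: le_trans hN0 _; rewrite ler_nat; exact: ltnW.
- exact: leq_ltn_trans (leq0n _) hM.
- exact: ltW.
Qed.
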